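(* For a fixed value of the sticky size $N$, the node potential $\phi_x$ of a node $x$ of a pairing heap is monotone nondecreasing in each of $|x_L|$ and $|x_R|$, the sizes of its left and right subtrees in the binary view.
   Context: A pairing heap is a heap-ordered rooted ordered tree; its binary view is the leftmost-child/right-sibling representation (left child in the binary view = leftmost child in the tree, right child in the binary view = next sibling to the right). For a node $x$, $x_L$ and $x_R$ denote its left and right children in the binary view, $|\cdot|$ denotes subtree size in the binary view (a missing child has size $0$), and $|x| = |x_L|+|x_R|+1$. $N \ge 1$ is the sticky size (a power of two) and $\lg=\log_2$. Node potential: if $|x_L| > \lg N$ and $|x_R| > \lg N$, $\phi_x = 400 + 100\lg|x|$; if $|x_L| \le \lg N < |x_R|$, $\phi_x = 400 + 100\frac{|x_L|}{\lg N}\lg|x|$; if $|x_R| \le \lg N < |x_L|$, $\phi_x = 400 + 100\frac{|x_R|}{\lg N}\lg|x|$; if $|x_L| \le \lg N$ and $|x_R| \le \lg N$, $\phi_x = 0$. *)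

(* Defs.v *)
From Stdlib Require Import Reals Lra Lia.
Open Scope R_scope.

Definition lg (x : R) : R := ln x / ln 2.

(* Node potential phi_x, as a function of the sticky size N and of the
   binary-view subtree sizes a = |x_L|, b = |x_R|; |x| = a + b + 1. *)
Definition phi (N a b : nat) : R :=
  let sx := INR (a + b + 1) in
  let lN := lg (INR N) in
  let A := INR a in
  let B := INR b in
  if Rlt_dec lN A then
    (if Rlt_dec lN B then 400 + 100 * lg sx
     else 400 + 100 * (B / lN) * lg sx)
  else
    (if Rlt_dec lN B then 400 + 100 * (A / lN) * lg sx
     else 0).

(* Binary view of a pairing heap (leftmost-child / right-sibling). *)
Inductive btree : Type := Leaf | Node (l : btree) (r : btree).
Fixpoint bsize (t : btree) : nat :=
  match t with Leaf => 0%nat | Node l r => (bsize l + bsize r + 1)%nat end.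
Definition node_phi (N : nat) (t : btree) : R :=
  match t with Leaf => 0 | Node l r => phi N (bsize l) (bsize r) end.

(* Main.v *)
Require Import Defs.
From Stdlib Require Import Reals Lra Lia.
Open Scope R_scope.

Lemma inv_facts (L : R) : 0 <= L -> (L = 0 /\ / L = 0) \/ (0 < / L /\ L * / L = 1).
Proof.
  intros H. destruct (Req_dec L 0) as [->|H0].
  - left; split; [reflexivity| apply Rinv_0].
  - right; split; [apply Rinv_0_lt_compat; lra | field; auto].
Qed.

Lemma lg_nonneg (n : nat) : (1 <= n)%nat -> 0 <= lg (INR n).
Proof.
  intros H. unfold lg. apply Rle_mult_inv_pos.
  - rewrite <- ln_1. assert (H' : 1 <= INR n) by (apply (le_INR 1); auto).
    destruct (Req_dec (INR n) 1) as [->|]; [lra|]. left; apply ln_increasing; lra.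
  - rewrite <- ln_1. apply ln_increasing; lra.
Qed.

Lemma lg_mono (n m : nat) : (1 <= n)%nat -> (n <= m)%nat -> lg (INR n) <= lg (INR m).
Proof.
  intros H1 H2. unfold lg. unfold Rdiv. apply Rmult_le_compat_r.
  - left. apply Rinv_0_lt_compat. rewrite <- ln_1. apply ln_increasing; lra.
  - assert (H3 : INR n <= INR m) by (apply le_INR; auto).
    assert (0 < INR n) by (apply lt_0_INR; lia).
    destruct (Req_dec (INR n) (INR m)) as [->|]; [lra|]. left; apply ln_increasing; lra.
Qed.

Lemma phi_sym N a b : phi N a b = phi N b a.
Proof.
  unfold phi. replace (b + a + 1)%nat with (a + b + 1)%nat by lia.
  destruct (Rlt_dec _ (INR a)); destruct (Rlt_dec _ (INR b)); reflexivity.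
Qed.

Lemma mono1 N a a' b : (1 <= N)%nat -> (a <= a')%nat -> phi N a b <= phi N a' b.
Proof.
  intros HN Ha. unfold phi.
  assert (HL : 0 <= lg (INR N)) by (apply lg_nonneg; auto).
  set (L := lg (INR N)) in *.
  assert (Hs : 0 <= lg (INR (a + b + 1))) by (apply lg_nonneg; lia).
  assert (Hs' : lg (INR (a + b + 1)) <= lg (INR (a' + b + 1))) by (apply lg_mono; lia).
  set (s := lg (INR (a + b + 1))) in *.
  set (s' := lg (INR (a' + b + 1))) in *.
  assert (HA : INR a <= INR a') by (apply le_INR; auto).
  assert (HA0 : 0 <= INR a) by apply pos_INR.
  assert (HB0 : 0 <= INR b) by apply pos_INR.
  unfold Rdiv.
  destruct (inv_facts L HL) as [[E1 E2]|[E1 E2]]; rewrite ?E2;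
  destruct (Rlt_dec L (INR a)); destruct (Rlt_dec L (INR a'));
  destruct (Rlt_dec L (INR b)); try nra.
  all: assert (0 <= INR b * / L) by nra; assert (0 <= INR a * / L) by nra;
    assert (INR a * / L <= INR a' * / L) by nra; try nra.
  all: assert (INR a * / L <= 1) by nra; nra.
Qed.

Theorem lemma3 (N : nat) (HN : exists k : nat, N = (2 ^ k)%nat) :
  (forall a a' b : nat, (a <= a')%nat -> phi N a b <= phi N a' b) /\
  (forall a b b' : nat, (b <= b')%nat -> phi N a b <= phi N a b').
Proof.
  assert (H1 : (1 <= N)%nat).
  { destruct HN as [k ->]. clear. induction k; simpl; lia. }
  split.
  - intros; apply mono1; auto.
  - intros a b b' H. rewrite (phi_sym N a b), (phi_sym N a b'). apply mono1; auto.
Qed.
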